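(* Let $\mathcal{C}$ be a self-dual CSS code on $n$ qubits (i.e., its $X$-type and $Z$-type stabilizer groups are $\{X_S : S\in\mathcal{S}\}$ and $\{Z_S : S \in \mathcal{S}\}$ for the same family $\mathcal S$ of subsets of $\{1,\dots,n\}$). Let $\sigma$ be a permutation of $\{1,\dots,n\}$ such that permuting the qubits by $\sigma$ maps the code space to itself. Let $U = \prod_{i:\, \sigma(i)\neq i} \mathrm{CZ}_{i,\sigma(i)}$ (one $\mathrm{CZ}$ gate for each such $i$, so that for a $2$-cycle $(i,j)$ of $\sigma$ the two gates $\mathrm{CZ}_{i,j}$ and $\mathrm{CZ}_{j,i}$ both appear). Then there is a Pauli operator $P$ that is a product of $Z$ operators such that $PU$ maps the code space to itself.
   Context: $\mathrm{CZ}_{a,b} = \mathbb 1 - 2|11\rangle\langle 11|$ on qubits $a,b$; it is symmetric in $a,b$. $X_S = \prod_{i\in S} X_i$, $Z_S = \prod_{i\in S}Z_i$. *)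

(* Defs.v *)
From HB Require Import structures.
From mathcomp Require Import all_boot all_order all_algebra all_fingroup all_field.
Set Implicit Arguments. Unset Strict Implicit. Unset Printing Implicit Defensive.
Import Order.TTheory GRing.Theory Num.Theory.
Local Open Scope ring_scope.

Definition bits (n : nat) := {ffun 'I_n -> bool}.
Definition state (n : nat) := bits n -> algC.

(* X_S : |x> |-> |x xor 1_S> *)
Definition flip n (S : {set 'I_n}) (x : bits n) : bits n :=
  [ffun i => x i (+) (i \in S)].
Definition Xop n (S : {set 'I_n}) (v : state n) : state n :=
  fun x => v (flip S x).
Definition Zop n (S : {set 'I_n}) (v : state n) : state n :=
  fun x => (-1) ^+ #|[set i in S | x i]| * v x.
Definition CZ n (a b : 'I_n) (v : state n) : state n :=
  fun x => (if x a && x b then -1 else 1) * v x.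
(* qubit permutation: the content of qubit i is moved to qubit sigma i,
   i.e. |x> |-> |y> with y_(sigma i) = x_i *)
Definition permop n (s : {perm 'I_n}) (v : state n) : state n :=
  fun y => v [ffun i => y (s i)].
(* U = prod_{i : sigma i <> i} CZ_{i, sigma i}  (all factors commute) *)
Definition Ucz n (s : {perm 'I_n}) : state n -> state n :=
  foldr (fun i f v => CZ i (s i) (f v)) id [seq i <- enum 'I_n | s i != i].

(* self-dual CSS code: X- and Z-stabilizer groups {X_S | S in calS},
   {Z_S | S in calS}; calS is a group under symmetric difference and
   the stabilizers commute (|S :&: T| even). *)
Definition selfdual_css n (calS : {set {set 'I_n}}) : Prop :=
  [/\ set0 \in calS,
      forall S T, S \in calS -> T \in calS -> (S :\: T) :|: (T :\: S) \in calS
    & forall S T, S \in calS -> T \in calS -> ~~ odd #|S :&: T| ].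

Definition in_code n (calS : {set {set 'I_n}}) (v : state n) : Prop :=
  forall S, S \in calS -> Xop S v =1 v /\ Zop S v =1 v.

Definition preserves_code n (calS : {set {set 'I_n}}) (A : state n -> state n) : Prop :=
  forall v, in_code calS v -> in_code calS (A v).

(* Main.v *)
Require Import Defs.
From HB Require Import structures.
From mathcomp Require Import all_boot all_order all_algebra all_fingroup all_field.
Set Implicit Arguments. Unset Strict Implicit. Unset Printing Implicit Defensive.
Import Order.TTheory GRing.Theory Num.Theory.
Local Open Scope ring_scope.

Definition sgb (b : bool) : algC := if b then -1 else 1.

Lemma sgb_expand a p b q :
  sgb ((a (+) p) && (b (+) q)) =
  (sgb (a && b) * sgb (a && q)) * (sgb (p && b) * sgb (p && q)).
Proof.
by case: a; case: p; case: b; case: q;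
  rewrite /sgb /= ?mulr1 ?mul1r ?mulrNN ?mulr1 ?mulN1r ?opprK.
Qed.

Lemma prod_sgb n (A : {set 'I_n}) (g : 'I_n -> bool) :
  \prod_i sgb ((i \in A) && g i) = (-1) ^+ #|[set i in A | g i]|.
Proof.
rewrite -prodr_const [RHS]big_mkcond /=; apply: eq_bigr => i _.
by rewrite inE /sgb; case: (_ && _).
Qed.

Lemma even_sign n (A B : {set 'I_n}) :
  ~~ odd #|A :&: B| -> ((-1) ^+ #|[set i in A | i \in B]| : algC) = 1.
Proof.
move=> h; have -> : [set i in A | i \in B] = A :&: B.
  by apply/setP => i; rewrite !inE.
by rewrite -signr_odd (negbTE h) expr0.
Qed.

Definition fq n (s : {perm 'I_n}) (x : bits n) : algC :=
  \prod_i sgb (x i && x (s i)).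

Definition Fpre n (s : {perm 'I_n}) (P : {set 'I_n}) := [set i | s i \in P].

Lemma Ucz_eq n (s : {perm 'I_n}) (l : seq 'I_n) (v : state n) x :
  foldr (fun i f v => CZ i (s i) (f v)) id l v x =
  \prod_(i <- l) sgb (x i && x (s i)) * v x.
Proof.
elim: l => [|i l IH] /=; first by rewrite big_nil mul1r.
by rewrite big_cons /CZ IH mulrA /sgb.
Qed.

Lemma fE n (s : {perm 'I_n}) (v : state n) x :
  Zop [set i | s i == i] (Ucz s v) x = fq s x * v x.
Proof.
rewrite /Zop /Ucz Ucz_eq big_filter mulrA; congr (_ * _).
rewrite /fq [RHS](bigID (fun i => s i == i)) /= -prod_sgb big_enum_cond /=.
congr (_ * _).
rewrite [RHS]big_mkcond /=; apply: eq_bigr => i _; rewrite inE.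
by case: eqP => [->|]; rewrite ?andbb.
Qed.

Definition sym n (A B : {set 'I_n}) := (A :\: B) :|: (B :\: A).

Theorem claim2 (n : nat) (calS : {set {set 'I_n}}) (s : {perm 'I_n}) :
  selfdual_css calS ->
  preserves_code calS (permop s) ->
  exists T : {set 'I_n}, preserves_code calS (fun v => Zop T (Ucz s v)).
Proof.
move=> [h0 hD hO] hP.
have symE : forall Y S, S \in calS -> (sym Y S \in calS) = (Y \in calS).
  move=> Y S hS; apply/idP/idP => h; last exact: hD.
  have e : (sym Y S :\: S) :|: (S :\: sym Y S) = Y.
    apply/setP => i; rewrite !inE.
    by case: (i \in Y); case: (i \in S).
  by rewrite -e; exact: hD.
pose v0 : state n := fun y => if [set i | y i] \in calS then 1 else 0.
have hv0 : in_code calS v0.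
  move=> S hS; split => y.
    rewrite /Xop /v0.
    have -> : [set i | flip S y i] = sym [set i | y i] S.
      by apply/setP => i; rewrite !inE ffunE; case: (y i); case: (i \in S).
    by rewrite symE.
  rewrite /Zop /v0; case: ifP => hY; last by rewrite mulr0.
  have := even_sign (hO _ _ hS hY); rewrite mulr1.
  have -> : [set i in S | i \in [set i0 | y i0]] = [set i in S | y i].
    by apply/setP => i; rewrite !inE.
  done.
have hF : forall S, S \in calS -> Fpre s S \in calS.
  move=> S hS; have [hX _] := hP v0 hv0 S hS.
  have := hX [ffun _ => false]; rewrite /Xop /permop /v0.
  have -> : [set i | [ffun i0 => flip S [ffun=> false] (s i0)] i] = Fpre s S.
    by apply/setP => i; rewrite !inE !ffunE.
  have -> : [set i | [ffun i0 => ([ffun=> false] : bits n) (s i0)] i] = set0.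
    by apply/setP => i; rewrite !inE !ffunE.
  rewrite h0; case: ifP => // _ /eqP; rewrite eq_sym oner_eq0.
  done.
have Finj : injective (Fpre s).
  move=> P Q /setP h; apply/setP => j; have := h (s^-1 j)%g.
  by rewrite !inE permKV.
have Fsurj : Fpre s @: calS = calS.
  apply/eqP; rewrite eqEcard card_imset // leqnn andbT.
  by apply/subsetP => _ /imsetP [P hP0 ->]; exact: hF.
exists [set i | s i == i] => v hv S hS.
have [hX hZ] := hv S hS.
split => y.
  rewrite /Xop !fE.
  have -> : v (flip S y) = v y := hX y.
  have [->|nz] := eqVneq (v y) 0; first by rewrite !mulr0.
  congr (_ * _).
  have orth : forall A, A \in calS -> ((-1) ^+ #|[set i in A | y i]| : algC) = 1.
    move=> A hA; apply: (mulIf nz); rewrite mul1r; exact: ((hv A hA).2 y).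
  rewrite /fq.
  under eq_bigr do rewrite !ffunE sgb_expand.
  rewrite !big_split /=.
  have eB : \prod_i sgb (y i && (s i \in S)) = 1.
    rewrite -[RHS](orth (Fpre s S)) ?hF // -prod_sgb; apply: eq_bigr => i _.
    by rewrite /Fpre inE andbC.
  have eD : \prod_i sgb ((i \in S) && (s i \in S)) = 1.
    rewrite -[RHS](even_sign (hO _ _ hS (hF _ hS))) -prod_sgb.
    by apply: eq_bigr => i _; rewrite /Fpre inE.
  have eC : \prod_i sgb ((i \in S) && y (s i)) = 1.
    move: hS; rewrite -Fsurj => /imsetP [P hP1 ->].
    rewrite -[RHS](orth P hP1) -prod_sgb [RHS](reindex_inj (@perm_inj _ s)) /=.
    by apply: eq_bigr => i _; rewrite /Fpre inE.
  by rewrite eB eC eD !mulr1.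
change ((-1) ^+ #|[set i in S | y i]| * Zop [set i | s i == i] (Ucz s v) y = Zop [set i | s i == i] (Ucz s v) y).
rewrite fE.
have hZy : (-1) ^+ #|[set i in S | y i]| * v y = v y := hZ y.
by rewrite mulrCA hZy.
Qed.
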